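(* Let $A,B\in\mathbb{R}_+^{n\times n}$ be circulant matrices with $\lambda(A)=\lambda(B)\ne0$ and $A\le B$. Then $$x\in\mathrm{Attr}(B)\iff B^{n^2}_{i\bullet}\otimes x=B^{n^2}_{j\bullet}\otimes x\ \text{ for all } i,j\in\{1,\dots,n\}\text{ with } i\sim_A j.$$
   Context: Max algebra on $\mathbb{R}_+$: $\oplus=\max$, ordinary product; $B^t$ max-algebraic power, $B^t_{i\bullet}$ its $i$-th row, $B^t_{i\bullet}\otimes x=\max_k(B^t)_{i,k}x_k$. $\lambda(\cdot)$: greatest max-algebraic eigenvalue (maximum cycle geometric mean). $\mathrm{Attr}(B)=\{x\in\mathbb{R}_+^n: B^{t+1}\otimes x=\lambda(B)B^t\otimes x\text{ for some }t\ge0\}$. The critical digraph $\mathcal{C}(A)$ consists of nodes and edges of the cycles of the weighted digraph of $A$ whose geometric mean equals $\lambda(A)$; $i\sim_A j$ means $i$ and $j$ lie in the same strongly connected component of $\mathcal{C}(A)$. Circulant: $A_{i,j}=a_t$ with $t\equiv j-i\pmod n$, $t\in\{0,\dots,n-1\}$. *)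

(* Defs.v *)
From Stdlib Require Import Reals Relations.
From mathcomp Require Import all_boot.
Set Implicit Arguments. Unset Strict Implicit. Unset Printing Implicit Defensive.

Definition mat (n : nat) := 'I_n -> 'I_n -> R.
Definition vec (n : nat) := 'I_n -> R.

Definition nonneg_mat n (A : mat n) : Prop := forall i j, Rle 0 (A i j).
Definition nonneg_vec n (x : vec n) : Prop := forall i, Rle 0 (x i).
Definition mat_le n (A B : mat n) : Prop := forall i j, Rle (A i j) (B i j).

Definition mmul n (A B : mat n) : mat n :=
  fun i j => \big[Rmax/R0]_(k < n) Rmult (A i k) (B k j).
Definition mid n : mat n := fun i j => if i == j then R1 else R0.
Fixpoint mpow n (A : mat n) (t : nat) : mat n :=
  match t with O => @mid n | S t' => mmul A (mpow A t') end.
(* (A (x) x)_i = max_k A_{i,k} x_k, i.e. A_{i.} (x) x *)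
Definition mvec n (A : mat n) (x : vec n) : vec n :=
  fun i => \big[Rmax/R0]_(k < n) Rmult (A i k) (x k).

(* A (simple) cycle of length k+1 in the digraph of A: an injective map
   c : 'I_(k+1) -> 'I_n, visiting c 0 -> c 1 -> ... -> c k -> c 0. *)
Definition cyc_weight n k (A : mat n) (c : 'I_k.+1 -> 'I_n) : R :=
  \big[Rmult/R1]_(l < k.+1) A (c l) (c (ordS l)).
Definition geom_mean (w : R) (len : nat) : R :=
  if Rlt_dec 0 w then Rpower w (/ INR len) else R0.
Definition cyc_mean n k (A : mat n) (c : 'I_k.+1 -> 'I_n) : R :=
  geom_mean (cyc_weight A c) k.+1.

(* lambda(A): maximum cycle geometric mean over all simple cycles
   (their length k+1 is at most n); 0 if there is no cycle. *)
Definition lambda n (A : mat n) : R :=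
  \big[Rmax/R0]_(k < n)
     \big[Rmax/R0]_(c : {ffun 'I_k.+1 -> 'I_n} | injectiveb c) cyc_mean A c.

Definition crit_cycle n k (A : mat n) (c : 'I_k.+1 -> 'I_n) : Prop :=
  injective c /\ cyc_mean A c = lambda A.
Definition crit_node n (A : mat n) (u : 'I_n) : Prop :=
  exists k (c : 'I_k.+1 -> 'I_n) l, crit_cycle A c /\ c l = u.
Definition crit_edge n (A : mat n) (u v : 'I_n) : Prop :=
  exists k (c : 'I_k.+1 -> 'I_n) l,
    crit_cycle A c /\ c l = u /\ c (ordS l) = v.
Definition crit_equiv n (A : mat n) (i j : 'I_n) : Prop :=
  crit_node A i /\ crit_node A j /\
  clos_refl_trans _ (crit_edge A) i j /\ clos_refl_trans _ (crit_edge A) j i.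

Definition Attr n (B : mat n) (x : vec n) : Prop :=
  nonneg_vec x /\
  exists t : nat, forall i,
    mvec (mpow B t.+1) x i = Rmult (lambda B) (mvec (mpow B t) x i).

Definition circulant n (A : mat n) : Prop :=
  exists a : nat -> R, forall i j : 'I_n,
    A i j = a ((nat_of_ord j + n - nat_of_ord i) %% n)%N.

(* Main.v *)
Require Import Defs.
From Stdlib Require Import Reals Relations Lra FunctionalExtensionality.
From HB Require Import structures.
From mathcomp Require Import all_boot zify.
Set Implicit Arguments. Unset Strict Implicit. Unset Printing Implicit Defensive.

Lemma Rmult_assoc' : associative Rmult. Proof. move=> a b c; by rewrite Rmult_assoc. Qed.
HB.instance Definition _ := Monoid.isComLaw.Build R R1 Rmult Rmult_assoc' Rmult_comm Rmult_1_l.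

Local Open Scope R_scope.

Section BigMax.
Variable I : eqType.

Lemma bigmax_ge (r : seq I) (P : pred I) (F : I -> R) i :
  i \in r -> P i -> F i <= \big[Rmax/R0]_(j <- r | P j) F j.
Proof.
elim: r => [//|x r IH]; rewrite inE big_cons => /orP [/eqP -> | ir] Pi.
  by rewrite Pi; apply: Rmax_l.
case: (P x); last by apply: IH.
apply: Rle_trans (IH ir Pi) _; apply: Rmax_r.
Qed.

Lemma bigmax_ge0 (r : seq I) (P : pred I) (F : I -> R) :
  0 <= \big[Rmax/R0]_(j <- r | P j) F j.
Proof.
elim: r => [|x r IH]; first by rewrite big_nil; lra.
rewrite big_cons; case: (P x) => //; apply: Rle_trans IH _; apply: Rmax_r.
Qed.

Lemma bigmax_le (r : seq I) (P : pred I) (F : I -> R) u :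
  0 <= u -> (forall j, P j -> F j <= u) -> \big[Rmax/R0]_(j <- r | P j) F j <= u.
Proof.
move=> u0 H; apply: (big_ind (fun v => v <= u)) => //.
by move=> a b Ha Hb; apply: Rmax_lub.
Qed.

Lemma bigmax_att (r : seq I) (P : pred I) (F : I -> R) :
  \big[Rmax/R0]_(j <- r | P j) F j = R0 \/
  exists j, j \in r /\ P j /\ \big[Rmax/R0]_(j <- r | P j) F j = F j.
Proof.
elim: r => [|x r IH]; first by left; rewrite big_nil.
rewrite big_cons; case Px: (P x).
  rewrite /Rmax; case: Rle_dec => _.
    case: IH => [->|[j [jr [Pj ->]]]]; first by left.
    by right; exists j; rewrite inE jr orbT.
  by right; exists x; rewrite inE eqxx.
case: IH => [->|[j [jr [Pj ->]]]]; first by left.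
by right; exists j; rewrite inE jr orbT.
Qed.
End BigMax.

Section Vec.
Variable n : nat.
Implicit Types (P Q B : mat n) (x y z : vec n).

Lemma mvec_ge0 B x i : 0 <= mvec B x i.
Proof. exact: bigmax_ge0. Qed.

Lemma mvec_ge B x i k : B i k * x k <= mvec B x i.
Proof. exact: (@bigmax_ge _ _ xpredT (fun k => B i k * x k) k (mem_index_enum k) isT). Qed.

Lemma mvec_att B x i : mvec B x i = 0 \/ exists k, mvec B x i = B i k * x k.
Proof.
case: (bigmax_att (index_enum 'I_n) xpredT (fun k => B i k * x k)) => H.
  by left.
by right; case: H => k [_ [_ H]]; exists k.
Qed.

Lemma mvec_le B x i u : 0 <= u -> (forall k, B i k * x k <= u) -> mvec B x i <= u.
Proof. by move=> u0 H; apply: bigmax_le. Qed.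

Lemma mmul_ge0 P Q : nonneg_mat (mmul P Q).
Proof. by move=> i j; apply: bigmax_ge0. Qed.

Lemma mmul_ge P Q i j k : P i k * Q k j <= mmul P Q i j.
Proof. exact: (@bigmax_ge _ _ xpredT (fun k => P i k * Q k j) k (mem_index_enum k) isT). Qed.

Lemma mmul_att P Q i j : mmul P Q i j = 0 \/ exists k, mmul P Q i j = P i k * Q k j.
Proof.
case: (bigmax_att (index_enum 'I_n) xpredT (fun k => P i k * Q k j)) => H.
  by left.
by right; case: H => k [_ [_ H]]; exists k.
Qed.

Lemma mvec_mmul P Q x : nonneg_mat P -> nonneg_vec x ->
  mvec (mmul P Q) x = mvec P (mvec Q x).
Proof.
move=> hP hx; apply: functional_extensionality => i; apply: Rle_antisym.
  apply: mvec_le; first exact: mvec_ge0.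
  move=> k; case: (mmul_att P Q i k) => [->|[j ->]].
    rewrite Rmult_0_l; exact: mvec_ge0.
  apply: Rle_trans (mvec_ge _ _ i j); rewrite Rmult_assoc.
  apply: Rmult_le_compat_l => //; exact: mvec_ge.
apply: mvec_le; first exact: mvec_ge0.
move=> j; case: (mvec_att Q x j) => [->|[k ->]].
  rewrite Rmult_0_r; exact: mvec_ge0.
apply: Rle_trans (mvec_ge _ _ i k); rewrite -Rmult_assoc.
apply: Rmult_le_compat_r => //; exact: mmul_ge.
Qed.

Lemma mvec_mid x : nonneg_vec x -> mvec (@mid n) x = x.
Proof.
move=> hx; apply: functional_extensionality => i; apply: Rle_antisym.
  apply: mvec_le => // k; have := hx i; rewrite /mid; case: eqP => [->|_]; lra.
by apply: Rle_trans (mvec_ge _ _ i i); rewrite /mid eqxx; lra.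
Qed.

Lemma mpow_ge0 B t : nonneg_mat B -> nonneg_mat (mpow B t).
Proof.
move=> hB; case: t => [|t] i j /=; last exact: mmul_ge0.
rewrite /mid; case: eqP => _; lra.
Qed.

Lemma mvec_mpow B x t : nonneg_mat B -> nonneg_vec x ->
  mvec (mpow B t) x = iter t (mvec B) x.
Proof.
move=> hB hx; elim: t => [|t IH] /=; first exact: mvec_mid.
by rewrite mvec_mmul // IH.
Qed.

Lemma mvec_mono B y z i : nonneg_mat B -> (forall k, y k <= z k) ->
  mvec B y i <= mvec B z i.
Proof.
move=> hB H; apply: mvec_le; first exact: mvec_ge0.
move=> k; apply: Rle_trans (mvec_ge _ _ i k); exact: Rmult_le_compat_l.
Qed.

Lemma mvec_scale B y c : nonneg_mat B -> 0 <= c ->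
  mvec B (fun k => c * y k) = (fun i => c * mvec B y i).
Proof.
move=> hB c0; apply: functional_extensionality => i; apply: Rle_antisym.
  apply: mvec_le; first by apply: Rmult_le_pos => //; exact: mvec_ge0.
  move=> k; rewrite -Rmult_assoc (Rmult_comm _ c) Rmult_assoc.
  apply: Rmult_le_compat_l => //; exact: mvec_ge.
case: (mvec_att B y i) => [->|[k ->]].
  rewrite Rmult_0_r; exact: mvec_ge0.
apply: Rle_trans (mvec_ge _ _ i k); lra.
Qed.

End Vec.
Section Circ.
Variable N : nat.
Local Notation n := N.+1.

Definition sh (i : 'I_n) (e : nat) : 'I_n := inord ((i + e) %% n).

Lemma sh_val i e : nat_of_ord (sh i e) = ((i + e) %% n)%N.
Proof. by rewrite /sh inordK // ltn_pmod. Qed.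

Lemma sh_eq i e e' : (e = e' %[mod n])%N -> sh i e = sh i e'.
Proof. by move=> H; apply: val_inj => /=; rewrite !sh_val -modnDmr H modnDmr. Qed.

Lemma sh0 i : sh i 0 = i.
Proof. by apply: val_inj => /=; rewrite sh_val addn0 modn_small. Qed.

Lemma shD i e s : sh (sh i e) s = sh i (e + s).
Proof. by apply: val_inj => /=; rewrite !sh_val modnDml addnA. Qed.

Lemma sh_diff (u k : 'I_n) : k = sh u ((k + n - u) %% n).
Proof.
apply: val_inj => /=; rewrite sh_val modnDmr.
have ul : (u <= n)%N by apply: ltnW.
rewrite -addnBA // addnCA subnKC // modnDr modn_small //.
Qed.

Lemma diff_sh (u : 'I_n) s : (s < n)%N -> ((sh u s + n - u) %% n)%N = s.
Proof.
move=> sn; rewrite sh_val.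
have ul : (u <= n)%N by apply: ltnW.
rewrite -addnBA // modnDml addnAC subnKC // modnDl modn_small //.
Qed.

Lemma circ_sh (A : mat n) (a : nat -> R) :
  (forall i j : 'I_n, A i j = a ((nat_of_ord j + n - nat_of_ord i) %% n)%N) ->
  forall u s, (s < n)%N -> A u (sh u s) = a s.
Proof. by move=> hA u s sn; rewrite hA diff_sh. Qed.

End Circ.

Fixpoint nsum (m : nat) (f : nat -> nat) : nat :=
  match m with O => O | S m' => (nsum m' f + f m')%N end.
Fixpoint rprod (m : nat) (f : nat -> R) : R :=
  match m with O => R1 | S m' => rprod m' f * f m' end.

Lemma nsum_ext m f g : (forall r, (r < m)%N -> f r = g r) -> nsum m f = nsum m g.
Proof.
elim: m => [//|m IH] H /=; rewrite IH ?H // => r rm; apply: H; exact: ltnW.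
Qed.

Lemma rprod_ext m f g : (forall r, (r < m)%N -> f r = g r) -> rprod m f = rprod m g.
Proof.
elim: m => [//|m IH] H /=; rewrite IH ?H // => r rm; apply: H; exact: ltnW.
Qed.

Lemma nsum_bump m f f' s d : (s < m)%N ->
  (forall r, (r < m)%N -> f' r = if r == s then (f r + d)%N else f r) ->
  nsum m f' = (d + nsum m f)%N.
Proof.
elim: m => [//|m IH] sm H /=.
case: (ltngtP s m) => [lt|gt|se].
- rewrite IH //; last by move=> r rm; apply: H; exact: ltnW.
  rewrite H // eq_sym (ltn_eqF lt); lia.
- by rewrite ltnS leqNgt gt in sm.
- rewrite H // -se eqxx.
  rewrite (nsum_ext (g := f)); first lia.
  move=> r rm; rewrite H ?(ltn_eqF rm) // -se; exact: ltnW.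
Qed.

Lemma rprod_bump m f f' s d : (s < m)%N ->
  (forall r, (r < m)%N -> f' r = if r == s then d * f r else f r) ->
  rprod m f' = d * rprod m f.
Proof.
elim: m => [//|m IH] sm H /=.
case: (ltngtP s m) => [lt|gt|se].
- rewrite IH //; last by move=> r rm; apply: H; exact: ltnW.
  by rewrite H // eq_sym (ltn_eqF lt); ring.
- by rewrite ltnS leqNgt gt in sm.
- rewrite H // -se eqxx.
  rewrite (rprod_ext (g := f)); first by ring.
  move=> r rm; rewrite H ?(ltn_eqF rm) // -se; exact: ltnW.
Qed.

Lemma nsum_eq0 m f : nsum m f = 0%N -> forall r, (r < m)%N -> f r = 0%N.
Proof.
elim: m => [//|m IH] /= /eqP; rewrite addn_eq0 => /andP [/eqP H1 /eqP H2] r.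
rewrite ltnS leq_eqVlt => /orP [/eqP -> //| rm]; exact: IH.
Qed.

Lemma nsum0 m f : (forall r, (r < m)%N -> f r = 0%N) -> nsum m f = 0%N.
Proof. move=> H; rewrite (nsum_ext (g := fun _ => 0%N)) //; by elim: m {H} => //= m ->. Qed.

Lemma rprod1 m f : (forall r, (r < m)%N -> f r = 1) -> rprod m f = 1.
Proof. move=> H; rewrite (rprod_ext (g := fun _ => 1)) //; elim: m {H} => //= m ->; ring. Qed.

Lemma rprod_ge0 m f : (forall r, (r < m)%N -> 0 <= f r) -> 0 <= rprod m f.
Proof.
elim: m => [|m IH] H /=; first lra.
apply: Rmult_le_pos; [apply: IH => r rm; apply: H; exact: ltnW | exact: H].
Qed.

Lemma nsum_pos m f : (0 < nsum m f)%N -> exists2 s, (s < m)%N & (0 < f s)%N.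
Proof.
move=> H; case: (boolP [exists s : 'I_m, 0 < f s]%N).
  by case/existsP => s Hs; exists s.
rewrite negb_exists => /forallP Hall.
suff: nsum m f = 0%N by move=> E; rewrite E in H.
apply: nsum0 => r rm; have := Hall (Ordinal rm); rewrite /= lt0n negbK => /eqP.
done.
Qed.

Lemma nsum_le m f K : (forall r, (r < m)%N -> (f r <= K)%N) -> (nsum m f <= m * K)%N.
Proof.
elim: m => [//|m IH] H /=; rewrite mulSn addnC leq_add ?H //.
apply: IH => r rm; apply: H; exact: ltnW.
Qed.
Section Counts.
Variable N : nat.
Local Notation n := N.+1.
Variables (B : mat n) (b : nat -> R) (x : vec n) (lam : R) (t0 : nat).
Hypothesis hB : nonneg_mat B.
Hypothesis hb : forall i j : 'I_n, B i j = b ((nat_of_ord j + n - nat_of_ord i) %% n)%N.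
Hypothesis hx : nonneg_vec x.
Hypothesis blam : forall s, (s < n)%N -> b s <= lam.
Hypothesis t0n : (t0 < n)%N.
Hypothesis bt0 : b t0 = lam.

Definition Tot (c : nat -> nat) := nsum n c.
Definition Ec (c : nat -> nat) := nsum n (fun r => r * c r)%N.
Definition Wc (c : nat -> nat) := rprod n (fun r => b r ^ c r).
Definition Vit t := iter t (mvec B) x.

Lemma b_ge0 s : (s < n)%N -> 0 <= b s.
Proof. move=> sn; rewrite -(circ_sh hb ord0 sn); exact: hB. Qed.

Lemma Wc_ge0 c : 0 <= Wc c.
Proof. apply: rprod_ge0 => r rn; apply: pow_le; exact: b_ge0. Qed.

Lemma Vit_ge0 t i : 0 <= Vit t i.
Proof. case: t => [|t] /=; [exact: hx | exact: mvec_ge0]. Qed.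

Lemma addc_facts c c' s a : (s < n)%N ->
  (forall r, (r < n)%N -> c r = if r == s then (c' r + a)%N else c' r) ->
  [/\ Tot c = (a + Tot c')%N, Ec c = (s * a + Ec c')%N & Wc c = b s ^ a * Wc c'].
Proof.
move=> sn H; rewrite /Tot /Ec /Wc; split.
- exact: (nsum_bump sn H).
- apply: (@nsum_bump n _ _ s) => // r rn; rewrite H //; case: eqP => [->|_] //; by rewrite mulnDr.
- apply: (@rprod_bump n _ _ s) => // r rn; rewrite H //; case: eqP => [->|_] //.
  by rewrite -pow_add Nat.add_comm.
Qed.

Lemma dec_facts c s a : (s < n)%N -> (a <= c s)%N ->
  let c' := fun r => if r == s then (c r - a)%N else c r in
  [/\ Tot c = (a + Tot c')%N, Ec c = (s * a + Ec c')%N & Wc c = b s ^ a * Wc c'].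
Proof.
move=> sn acs c'; apply: addc_facts => // r rn; rewrite /c'.
by case: eqP => [->|_] //; rewrite subnK.
Qed.

Lemma lowerA t : forall c i, Tot c = t -> Wc c * x (sh i (Ec c)) <= Vit t i.
Proof.
elim: t => [|t IH] c i Ht.
- have c0 := nsum_eq0 Ht.
  have -> : Wc c = 1 by apply: rprod1 => r rn; rewrite c0.
  have -> : Ec c = 0%N by apply: nsum0 => r rn; rewrite c0 // muln0.
  rewrite sh0 /=; lra.
- have [s sn cs] : exists2 s, (s < n)%N & (0 < c s)%N.
    by apply: nsum_pos; rewrite /Tot in Ht; rewrite Ht.
  have [T1 E1 W1] := dec_facts sn cs.
  set c' := (fun r => _) in T1 E1 W1.
  have Tc' : Tot c' = t by move: T1; rewrite Ht add1n => -[].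
  rewrite E1 W1 pow_1 -shD /=.
  apply: Rle_trans (mvec_ge _ _ i (sh i s)).
  rewrite (circ_sh hb i sn) muln1 Rmult_assoc.
  apply: Rmult_le_compat_l; first exact: b_ge0.
  exact: IH.
Qed.

Lemma upperB t : forall i, exists c, Tot c = t /\ Vit t i <= Wc c * x (sh i (Ec c)).
Proof.
elim: t => [|t IH] i.
- exists (fun _ => 0%N); split; first by apply: nsum0.
  have -> : Wc (fun _ => 0%N) = 1 by apply: rprod1.
  have -> : Ec (fun _ => 0%N) = 0%N by apply: nsum0 => r _; rewrite muln0.
  rewrite sh0 /=; lra.
- have ge0c c j : 0 <= Wc c * x (sh j (Ec c)).
    apply: Rmult_le_pos; [exact: Wc_ge0 | exact: hx].
  case: (mvec_att B (Vit t) i) => [E0|[k Ek]].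
  + have [c [Tc _]] := IH i.
    pose c' := fun r => if r == 0%N then (c r + 1)%N else c r.
    have [T1 _ _] := @addc_facts c' c 0 1 (ltn0Sn _) (fun r _ => erefl).
    exists c'; split; first by rewrite T1 Tc add1n.
    by rewrite /= E0.
  + set s := ((k + n - i) %% n)%N.
    have sn : (s < n)%N by apply: ltn_pmod.
    have ks : k = sh i s by apply: sh_diff.
    have [c [Tc Hc]] := IH k.
    pose c' := fun r => if r == s then (c r + 1)%N else c r.
    have [T1 E1 W1] := @addc_facts c' c s 1 sn (fun r _ => erefl).
    exists c'; split; first by rewrite T1 Tc add1n.
    rewrite /= Ek E1 W1 pow_1 muln1 -shD -ks.
    rewrite {1}ks (circ_sh hb i sn) Rmult_assoc.
    apply: Rmult_le_compat_l; first exact: b_ge0.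
    exact: Hc.
Qed.

Lemma pigeon c : (n * n <= Tot c)%N -> exists2 v, (v < n)%N & (n <= c v)%N.
Proof.
move=> H; case: (boolP [exists v : 'I_n, n <= c v]%N).
  by case/existsP => v Hv; exists v.
rewrite negb_exists => /forallP Hall.
have : (Tot c <= n * N)%N.
  apply: nsum_le => r rn; have := Hall (Ordinal rn); rewrite /= -ltnNge ltnS //.
move=> H2; have := leq_trans H H2; rewrite leq_mul2l /= ltnn //.
Qed.

Hypothesis lam0 : 0 <= lam.

Lemma PER m i : (n * n <= m + n)%N -> Vit (m + n) i = lam ^ n * Vit m i.
Proof.
move=> Hm; apply: Rle_antisym.
- have [c [Tc Hc]] := upperB (m + n) i.
  rewrite -Tc in Hm.
  have [v vn cv] := pigeon Hm.
  have [T1 E1 W1] := dec_facts vn cv.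
  set c' := (fun r => _) in T1 E1 W1.
  have Tc' : Tot c' = m by move: T1; rewrite Tc; lia.
  apply: Rle_trans Hc _.
  rewrite E1 W1 (@sh_eq _ _ _ (Ec c')); last first.
    by rewrite modnMDl.
  rewrite Rmult_assoc; apply: Rmult_le_compat.
  + apply: pow_le; exact: b_ge0.
  + apply: Rmult_le_pos; [exact: Wc_ge0 | exact: hx].
  + apply: pow_incr; split; [exact: b_ge0 | exact: blam].
  + exact: lowerA.
- have [c [Tc Hc]] := upperB m i.
  pose c' := fun r => if r == t0 then (c r + n)%N else c r.
  have [T1 E1 W1] := @addc_facts c' c t0 n t0n (fun r _ => erefl).
  apply: Rle_trans (lowerA (c := c') i _); last by rewrite T1 Tc addnC.
  rewrite W1 E1 bt0 (@sh_eq _ _ _ (Ec c)); last by rewrite modnMDl.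
  rewrite Rmult_assoc; apply: Rmult_le_compat_l; first by apply: pow_le.
  exact: Hc.
Qed.

End Counts.
Lemma prod_le_pow m (f : 'I_m -> R) L : (forall l, 0 <= f l <= L) ->
  0 <= \big[Rmult/R1]_(l < m) f l <= L ^ m.
Proof.
elim: m f => [|m IH] f H; first by rewrite big_ord0 /=; lra.
rewrite big_ord_recr /=.
have [P0 PL] := IH (fun i => f (widen_ord (leqnSn m) i)) (fun l => H _).
have [f0 fL] := H ord_max.
split; first exact: Rmult_le_pos.
rewrite Rmult_comm; apply: Rmult_le_compat => //.
Qed.

Lemma prod_eq_pow m (f : 'I_m -> R) L : 0 < L -> (forall l, 0 <= f l <= L) ->
  \big[Rmult/R1]_(l < m) f l = L ^ m -> forall l, f l = L.
Proof.
elim: m f => [|m IH] f L0 H; first by move=> _ [].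
rewrite big_ord_recr /= => E.
set g := fun i => f (widen_ord (leqnSn m) i).
have [P0 PL] := prod_le_pow (fun l => H (widen_ord (leqnSn m) l)).
have [f0 fL] := H ord_max.
have Lm : 0 < L ^ m by apply: pow_lt.
set P := \big[Rmult/R1]_(i < m) _ in E P0 PL.
have EP : P = L ^ m.
  apply: Rle_antisym => //.
  apply: (Rmult_le_reg_r L) => //.
  rewrite (Rmult_comm (L ^ m)) -E; apply: Rmult_le_compat_l => //.
have Ef : f ord_max = L.
  rewrite EP (Rmult_comm L) in E; apply: (Rmult_eq_reg_l (L ^ m)) => //; lra.
move=> l; case: (ltnP l m) => lm.
  have -> : l = widen_ord (leqnSn m) (Ordinal lm) by apply: val_inj.
  exact: (IH g L0 (fun l => H _) EP).
have -> : l = ord_max by apply: val_inj => /=; apply/eqP; rewrite eqn_leq lm -ltnS ltn_ord.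
exact: Ef.
Qed.

Lemma Rpower_pow_inv (y : R) (l : nat) : 0 < y -> (0 < l)%N -> Rpower (y ^ l) (/ INR l) = y.
Proof.
move=> y0 l0; rewrite -Rpower_pow // Rpower_mult Rinv_r ?Rpower_1 //.
apply: not_0_INR => Hl; by rewrite Hl in l0.
Qed.

Lemma Rpower_inv_pow (w y : R) (l : nat) : 0 < w -> 0 < y -> (0 < l)%N ->
  Rpower w (/ INR l) = y -> w = y ^ l.
Proof.
move=> w0 y0 l0 E; rewrite -Rpower_pow // -E Rpower_mult Rinv_l ?Rpower_1 //.
apply: not_0_INR => Hl; by rewrite Hl in l0.
Qed.

Lemma big_const_pow m (c : R) : \big[Rmult/R1]_(l < m) c = c ^ m.
Proof. rewrite big_const_ord; elim: m => [|m IH] //=; by rewrite IH. Qed.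

Section Cyc.
Variable N : nat.
Local Notation n := N.+1.
Variables (A : mat n) (a : nat -> R).
Hypothesis hA : nonneg_mat A.
Hypothesis ha : forall i j : 'I_n, A i j = a ((nat_of_ord j + n - nat_of_ord i) %% n)%N.

Lemma step_cycle (t : nat) :
  exists k, [/\ (k < n)%N, ((k.+1 * t) %% n = 0)%N &
   forall (i : 'I_n) l1 l2, (l1 < k.+1)%N -> (l2 < k.+1)%N -> sh i (l1 * t) = sh i (l2 * t) -> l1 = l2].
Proof.
have ex : exists l, (0 < l)%N && ((l * t) %% n == 0)%N by exists n; rewrite modnMr.
case: (ex_minnP ex) => l /andP [l0 /eqP lt] lmin.
exists l.-1; rewrite prednK //; split => //.
  by apply: lmin; rewrite modnMr.
have key l1 l2 : (l1 < l2)%N -> (l2 < l)%N ->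
   ((l1 * t) %% n = (l2 * t) %% n)%N -> False.
  move=> l12 l2l E.
  have : ((l2 - l1) * t %% n == 0)%N.
    have E2 : (l2 * t = l1 * t + (l2 - l1) * t)%N by rewrite -mulnDl subnKC // ltnW.
    move: E; rewrite E2 -{1}(addn0 (l1 * t)%N) => /eqP; rewrite eqn_modDl mod0n eq_sym.
    done.
  move=> H; have := lmin (l2 - l1)%N; rewrite subn_gt0 l12 H => /(_ isT) Hle.
  have : (l2 - l1 < l)%N by apply: leq_ltn_trans (leq_subr _ _) l2l.
  by rewrite ltnNge Hle.
move=> i l1 l2 l1l l2l E.
have E' : ((l1 * t) %% n = (l2 * t) %% n)%N.
  have := congr1 (@nat_of_ord _) E; rewrite !sh_val => /eqP; rewrite eqn_modDl => /eqP //.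
case: (ltngtP l1 l2) => // H.
  by case: (key l1 l2 H l2l E').
by case: (key l2 l1 H l1l (esym E')).
Qed.

Lemma sh_cyc k t (i : 'I_n) e : ((k.+1 * t) %% n = 0)%N -> sh i (e * t) = sh i ((e %% k.+1) * t).
Proof.
move=> H; apply: sh_eq.
move/eqP: H; rewrite -/(dvdn n (k.+1 * t)) => /dvdnP [q Hq].
rewrite {1}(divn_eq e k.+1) mulnDl -mulnA Hq mulnA modnMDl //.
Qed.

Lemma lam_ge0 : 0 <= lambda A.
Proof. exact: bigmax_ge0. Qed.

Definition scyc (k t : nat) (i : 'I_n) : 'I_k.+1 -> 'I_n := fun l => sh i (nat_of_ord l * t).

Lemma scyc_weight k t i : (t < n)%N -> ((k.+1 * t) %% n = 0)%N ->
  cyc_weight A (@scyc k t i) = a t ^ k.+1.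
Proof.
move=> tn H; rewrite /cyc_weight -big_const_pow; apply: eq_bigr => l _.
rewrite /scyc /= -(sh_cyc i (l.+1) H) mulSn addnC -shD.
exact: (circ_sh ha).
Qed.

Lemma cyc_mean_le_lam k (c : 'I_k.+1 -> 'I_n) : (k < n)%N -> injective c ->
  cyc_mean A c <= lambda A.
Proof.
move=> kn ic; pose K : 'I_n := Ordinal kn.
apply: Rle_trans (@bigmax_ge _ _ xpredT
   (fun K : 'I_n => \big[Rmax/R0]_(c : {ffun 'I_K.+1 -> 'I_n} | injectiveb c) cyc_mean A c)
   K (mem_index_enum K) isT).
pose F := finfun c.
have -> : cyc_mean A c = cyc_mean A F.
  by congr cyc_mean; apply: functional_extensionality => l; rewrite ffunE.
apply: (@bigmax_ge _ _ (fun F : {ffun 'I_K.+1 -> 'I_n} => injectiveb F)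
   (fun F => cyc_mean A F) F); first exact: mem_index_enum.
apply/injectiveP => l1 l2; rewrite !ffunE; exact: ic.
Qed.

Lemma entry_le_lam u v : A u v <= lambda A.
Proof.
set s := ((v + n - u) %% n)%N.
have sn : (s < n)%N by apply: ltn_pmod.
rewrite ha -/s.
case: (Rle_or_lt (a s) 0) => as0; first by have := lam_ge0; lra.
have [k [kn H inj]] := step_cycle s.
apply: Rle_trans (cyc_mean_le_lam (c := @scyc k s ord0) kn _).
  rewrite /cyc_mean scyc_weight // /geom_mean.
  case: Rlt_dec => Hp; first by rewrite Rpower_pow_inv //=; lra.
  by case: Hp; apply: pow_lt.
move=> l1 l2 E; apply: val_inj; exact: (inj ord0 _ _ (ltn_ord l1) (ltn_ord l2) E).
Qed.

Lemma crit_weight k (c : 'I_k.+1 -> 'I_n) : 0 < lambda A -> crit_cycle A c ->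
  forall l, A (c l) (c (ordS l)) = lambda A.
Proof.
move=> L0 [ic E].
move: E; rewrite /cyc_mean /geom_mean; case: Rlt_dec => w0 /= E; last lra.
have := Rpower_inv_pow w0 L0 (ltn0Sn k) E => Ew.
apply: (prod_eq_pow L0 _ Ew) => l; split; [exact: hA | exact: entry_le_lam].
Qed.

Lemma crit_edge_lam u v : 0 < lambda A -> crit_edge A u v -> A u v = lambda A.
Proof. move=> L0 [k [c [l [cc [<- <-]]]]]; exact: crit_weight. Qed.

Lemma crit_exists : 0 < lambda A -> exists t0, (t0 < n)%N /\ a t0 = lambda A.
Proof.
move=> L0.
case: (bigmax_att (index_enum 'I_n) xpredT
  (fun K : 'I_n => \big[Rmax/R0]_(c : {ffun 'I_K.+1 -> 'I_n} | injectiveb c) cyc_mean A c)).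
  rewrite -/(lambda A) => E; lra.
move=> [K [_ [_ EK]]]; rewrite -/(lambda A) in EK.
case: (bigmax_att (index_enum {ffun 'I_K.+1 -> 'I_n}) (fun c => injectiveb c)
   (fun c => cyc_mean A c)) => [E|[c [_ [ic Ec]]]].
  rewrite -EK in E; lra.
rewrite Ec in EK.
have cc : crit_cycle A c by split => //; exact/injectiveP.
have := crit_weight L0 cc ord0; rewrite ha => E.
by exists ((c (ordS ord0) + n - c ord0) %% n)%N; split => //; apply: ltn_pmod.
Qed.

Lemma crit_step_equiv t0 i : (t0 < n)%N -> a t0 = lambda A -> 0 < lambda A ->
  crit_equiv A i (sh i t0).
Proof.
move=> t0n at0 L0.
have [k [kn H inj]] := step_cycle t0.
set c := @scyc k t0 i.
have ic : injective c.
  move=> l1 l2 E; apply: val_inj; exact: (inj i _ _ (ltn_ord l1) (ltn_ord l2) E).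
have cc : crit_cycle A c.
  split => //; rewrite /cyc_mean scyc_weight // /geom_mean at0.
  case: Rlt_dec => Hp; first by rewrite Rpower_pow_inv //=.
  by case: Hp; apply: pow_lt.
pose cn e := sh i (e * t0).
have cnE e : cn e = c (inord (e %% k.+1)).
  rewrite /c /scyc inordK ?ltn_pmod //; exact: sh_cyc.
have node e : crit_node A (cn e).
  by exists k, c, (inord (e %% k.+1)); split => //; rewrite cnE.
have edge e : crit_edge A (cn e) (cn e.+1).
  exists k, c, (inord (e %% k.+1)); split => //; split; first by rewrite cnE.
  rewrite /c /scyc /= inordK ?ltn_pmod // -sh_cyc //.
  have M : ((e %% k.+1).+1 %% k.+1 = e.+1 %% k.+1)%N.
    by rewrite -[(e %% k.+1).+1]addn1 modnDml addn1.
  by rewrite /cn (sh_cyc _ (e %% k.+1).+1 H) (sh_cyc _ e.+1 H) M.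
have path p q : clos_refl_trans _ (crit_edge A) (cn p) (cn (p + q)%N).
  elim: q => [|q IH]; first by rewrite addn0; apply: rt_refl.
  apply: rt_trans IH _; rewrite addnS; apply: rt_step; exact: edge.
have c0 : cn 0%N = i by rewrite /cn mul0n sh0.
have c1 : cn 1%N = sh i t0 by rewrite /cn mul1n.
have cl : cn k.+1 = i by rewrite /cn (sh_cyc _ _ H) modnn mul0n sh0.
split; first by rewrite -c0.
split; first by rewrite -c1.
split; first by have := path 0%N 1%N; rewrite add0n c0 c1.
by have := path 1%N k; rewrite add1n c1 cl.
Qed.

End Cyc.
Theorem lemma5 (n : nat) (A B : mat n)
  (hA : nonneg_mat A) (hB : nonneg_mat B)
  (cA : circulant A) (cB : circulant B)
  (hlam : lambda A = lambda B) (hlam0 : lambda A <> R0)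
  (hAB : mat_le A B) (x : vec n) (hx : nonneg_vec x) :
  Attr B x <->
  (forall i j : 'I_n, crit_equiv A i j ->
     mvec (mpow B (n ^ 2)%N) x i = mvec (mpow B (n ^ 2)%N) x j).
Proof.
revert A B hA hB cA cB hlam hlam0 hAB x hx.
case: n => [|N] A B hA hB cA cB hlam hlam0 hAB x hx.
  split => [_ i|_]; first by case: i.
  by split => //; exists 0%N => -[].
set L := lambda A in hlam hlam0.
have L0 : 0 < L by have := lam_ge0 A; rewrite -/L; lra.
have L0' : 0 <= L by lra.
case: cA => a ha; case: cB => b hb.
have [t0 [t0n at0]] := crit_exists hA ha L0; rewrite -/L in at0.
have blam : forall s, (s < N.+1)%N -> b s <= L.
  by move=> s sn; rewrite -(circ_sh hb ord0 sn) hlam; exact: (entry_le_lam hb ord0 (sh ord0 s)).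
have bt0 : b t0 = L.
  apply: Rle_antisym; first exact: blam.
  rewrite -(circ_sh hb ord0 t0n) -at0 -(circ_sh ha ord0 t0n); exact: hAB.
have PER' := PER hB hb hx blam t0n bt0 L0'.
rewrite /Vit in PER'.
have MP t : mvec (mpow B t) x = iter t (mvec B) x by apply: mvec_mpow.
have Vge0 t i : 0 <= iter t (mvec B) x i by case: t => [|t] /=; [exact: hx | exact: mvec_ge0].
rewrite -mulnn /Attr !MP -hlam.
set n := N.+1.
split.
- move=> [_ [t Ht]]; rewrite !MP in Ht.
  have S d : forall i, iter (t + d).+1 (mvec B) x i = L * iter (t + d) (mvec B) x i.
    elim: d => [|d IH] i; first by rewrite addn0; exact: Ht.
    rewrite addnS.
    have E : iter (t + d).+1 (mvec B) x = fun k => L * iter (t + d) (mvec B) x k.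
      by apply: functional_extensionality => k; exact: IH.
    change (mvec B (iter (t + d).+1 (mvec B) x) i = L * iter (t + d).+1 (mvec B) x i).
    by rewrite {1}E mvec_scale.
  have P2 q : forall i, iter (n * n + q * n) (mvec B) x i = L ^ (q * n) * iter (n * n) (mvec B) x i.
    elim: q => [|q IH] i; first by rewrite mul0n addn0 /=; ring.
    rewrite mulSn addnCA addnC PER'; last by lia.
    rewrite IH -Rmult_assoc -pow_add //.
  set M := (n * n + t * n)%N.
  have tM : (t <= M)%N by rewrite /M; nia.
  have SM i : iter M.+1 (mvec B) x i = L * iter M (mvec B) x i.
    by rewrite -(subnKC tM); apply: S.
  have edge u v : crit_edge A u v -> iter M (mvec B) x v <= iter M (mvec B) x u.
    move=> ce; apply: (Rmult_le_reg_l L) => //.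
    have Euv := crit_edge_lam hA ha L0 ce; rewrite -/L in Euv.
    rewrite -(SM u) -Euv.
    change (A u v * iter M (mvec B) x v <= mvec B (iter M (mvec B) x) u).
    apply: Rle_trans (mvec_ge _ _ u v).
    apply: Rmult_le_compat_r; [exact: Vge0 | exact: hAB].
  have rt u v : clos_refl_trans _ (crit_edge A) u v -> iter M (mvec B) x v <= iter M (mvec B) x u.
    elim => [u' v' /edge //| u' | u' v' w' _ H1 _ H2]; first lra.
    lra.
  move=> i j [_ [_ [Hij Hji]]].
  have Lp : 0 < L ^ (t * n) by apply: pow_lt.
  apply: (Rmult_eq_reg_l (L ^ (t * n))); last lra.
  rewrite -!P2 -/M; apply: Rle_antisym; [exact: rt | exact: rt].
- move=> H; split => //; exists (n * n)%N => i; rewrite !MP.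
  set z := iter (n * n) (mvec B) x.
  have zsh i' : z (sh i' t0) = z i'.
    by have := H i' (sh i' t0) (crit_step_equiv ha i' t0n at0 L0) => E; rewrite /z E.
  pose u k := iter k (mvec B) z.
  have uE k : u k = iter (k + n * n) (mvec B) x by rewrite /u /z iterD.
  have step i' : L * z i' <= mvec B z i'.
    apply: Rle_trans (mvec_ge _ _ i' (sh i' t0)).
    by rewrite (circ_sh hb i' t0n) bt0 zsh; lra.
  have mono k : forall i', L * u k i' <= u k.+1 i'.
    elim: k => [|k IH] i'; first exact: step.
    rewrite /u /= -/(u k) -/(u k.+1).
    have -> : L * mvec B (u k) i' = mvec B (fun j => L * u k j) i'.
      by rewrite mvec_scale.
    by apply: mvec_mono => // j; apply: IH.
  have chain k : forall i', L ^ k * u 1%N i' <= u k.+1 i'.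
    elim: k => [|k IH] i' /=; first lra.
    apply: Rle_trans (mono k.+1 i'); rewrite Rmult_assoc; apply: Rmult_le_compat_l => //; exact: IH.
  have Un : u n i = L ^ n * z i.
    rewrite uE addnC PER' //; lia.
  have := chain N i; rewrite Un /= => C1.
  have := step i => C2.
  have LN : 0 < L ^ N by apply: pow_lt.
  change (mvec B z i = L * z i).
  apply: (Rmult_eq_reg_l (L ^ N)); last lra.
  apply: Rle_antisym.
    apply: Rle_trans C1 _; right; ring.
  apply: Rmult_le_compat_l; lra.
Qed.
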